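(* Let $a\ge 2$ and $c\ge 2$ be even integers with $a\neq c$. Then $U=\{(a,-a),(c,-c)\}\subseteq\mathcal{B}$ is unavoidable.
   Context: The bicyclic inverse semigroup is $\mathcal{B}=\{(a,b)\in\mathbb{Z}\times\mathbb{Z}\mid a\ge 0,\ a+b\ge 0\}$ with multiplication $(a,b)(c,d)=(\max\{c+d,a\}-d,\ b+d)$. A subset $U\subseteq\mathcal{B}$ is called avoidable if $\mathcal{B}$ can be partitioned into two subsets $A$ and $B$ such that no element of $U$ can be written as a product $xy$ of two distinct elements $x\neq y$ both in $A$, or both in $B$. A set is unavoidable if it is not avoidable. *)

(* Defs.v *)
From Stdlib Require Import ZArith.
Open Scope Z_scope.

Definition inB (p : Z * Z) : Prop := 0 <= fst p /\ 0 <= fst p + snd p.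

Definition bmul (p q : Z * Z) : Z * Z :=
  (Z.max (fst q + snd q) (fst p) - snd q, snd p + snd q).

(* A 2-partition {A, B} of the bicyclic semigroup is encoded by a colouring
   col : Z*Z -> bool restricted to B (A = col^-1 true, B = col^-1 false). *)
Definition avoidable (U : Z * Z -> Prop) : Prop :=
  exists col : Z * Z -> bool,
    forall x y : Z * Z, inB x -> inB y -> x <> y -> col x = col y ->
      ~ U (bmul x y).

Definition unavoidable (U : Z * Z -> Prop) : Prop := ~ avoidable U.

(* Main.v *)
Require Import Defs.
From Stdlib Require Import ZArith Lia.
Open Scope Z_scope.

Lemma tri (a c h : Z) : 1 <= h -> a = 2 * h -> a < c ->
  unavoidable (fun p : Z * Z => p = (a, - a) \/ p = (c, - c)).
Proof.
  intros Hh Ha Hac [col H].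
  set (x1 := (h, - h)). set (x2 := (c - h, - (c - h))). set (y := (a, - h)).
  assert (I1 : inB x1) by (unfold inB, x1; simpl; lia).
  assert (I2 : inB x2) by (unfold inB, x2; simpl; lia).
  assert (I3 : inB y) by (unfold inB, y; simpl; lia).
  assert (D12 : x1 <> x2) by (unfold x1, x2; intro E; injection E; lia).
  assert (D13 : x1 <> y) by (unfold x1, y; intro E; injection E; lia).
  assert (D23 : x2 <> y) by (unfold x2, y; intro E; injection E; lia).
  assert (P12 : bmul x1 x2 = (c, - c)).
  { unfold bmul, x1, x2; simpl. f_equal; lia. }
  assert (P13 : bmul x1 y = (a, - a)).
  { unfold bmul, x1, y; simpl. f_equal; lia. }
  assert (P23 : bmul x2 y = (c, - c)).
  { unfold bmul, x2, y; simpl. f_equal; lia. }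
  destruct (col x1) eqn:E1, (col x2) eqn:E2, (col y) eqn:E3.
  all: first
    [ apply (H x1 x2 I1 I2 D12 ltac:(congruence)); right; exact P12
    | apply (H x1 y I1 I3 D13 ltac:(congruence)); left; exact P13
    | apply (H x2 y I2 I3 D23 ltac:(congruence)); right; exact P23 ].
Qed.

Theorem corollary3p3 (a c : Z) :
  2 <= a -> Z.Even a -> 2 <= c -> Z.Even c -> a <> c ->
  unavoidable (fun p : Z * Z => p = (a, - a) \/ p = (c, - c)).
Proof.
  intros Ha [h Eh] Hc [k Ek] Hne.
  destruct (Z_lt_ge_dec a c) as [L|L].
  - apply (tri a c h); lia.
  - intros [col H]. apply (tri c a k ltac:(lia) Ek ltac:(lia)).
    exists col. intros x y ? ? ? ? U. apply (H x y); auto. tauto.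
Qed.
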